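(* Let $G$ be a finite simple graph with $n$ vertices and minimum degree $\delta$, and let $k$ be a positive integer. Then $\gamma_{gr}^{t,k}(G)\leq n-\delta+k$ and $\gamma_{gr}^{Z,k}(G)\leq\gamma_{gr}^{k}(G)\leq n-\delta+k-1$.
   Context: For a vertex $v$, $N(v)$ is its open neighborhood and $N[v]=N(v)\cup\{v\}$. A sequence $S=(v_1,\ldots,v_m)$ of distinct vertices is a $k$-sequence (resp. $k$-$Z$-sequence, $k$-$t$-sequence) if for each $i\in[m]$ there is a vertex $u_i$ with $u_i\in N[v_i]$ (resp. $N(v_i)$, $N(v_i)$) such that the number of indices $j<i$ with $u_i\in N[v_j]$ (resp. $N[v_j]$, $N(v_j)$) is less than $k$. The numbers $\gamma_{gr}^{k}(G)$, $\gamma_{gr}^{Z,k}(G)$, $\gamma_{gr}^{t,k}(G)$ are the maximum lengths of a $k$-sequence, $k$-$Z$-sequence, $k$-$t$-sequence of $G$, respectively. *)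

(* Defs.v *)
From mathcomp Require Import all_boot.
Set Implicit Arguments. Unset Strict Implicit. Unset Printing Implicit Defensive.

Definition simple_graph (T : finType) (e : rel T) : Prop :=
  symmetric e /\ irreflexive e.

Definition onbhd (T : finType) (e : rel T) (v : T) : {set T} := [set u | e v u].
Definition cnbhd (T : finType) (e : rel T) (v : T) : {set T} := v |: onbhd e v.

Definition deg (T : finType) (e : rel T) (v : T) : nat := #|onbhd e v|.

Definition is_min_degree (T : finType) (e : rel T) (delta : nat) : Prop :=
  (exists v, deg e v = delta) /\ (forall v, delta <= deg e v).

Definition gen_seq (T : finType) (A B : T -> {set T}) (k : nat) (m : nat)
  (s : m.-tuple T) : bool :=
  uniq s &&
  [forall i : 'I_m, [exists u in A (tnth s i),
      count (fun w => u \in B w) (take i s) < k]].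

(* maximum length of a sequence satisfying gen_seq (distinctness bounds the
   length by #|T|; the empty sequence always qualifies) *)
Definition gen_gr (T : finType) (A B : T -> {set T}) (k : nat) : nat :=
  \max_(m < #|T|.+1 | [exists s : m.-tuple T, gen_seq A B k s]) m.

Definition gamma_gr_k (T : finType) (e : rel T) (k : nat) : nat :=
  gen_gr (cnbhd e) (cnbhd e) k.
Definition gamma_gr_Zk (T : finType) (e : rel T) (k : nat) : nat :=
  gen_gr (onbhd e) (cnbhd e) k.
Definition gamma_gr_tk (T : finType) (e : rel T) (k : nat) : nat :=
  gen_gr (onbhd e) (onbhd e) k.

(* Main.v *)
Require Import Defs.
From mathcomp Require Import all_boot.
From mathcomp Require Import zify.

Lemma gen_seq_bound (T : finType) (A B : T -> {set T}) k m (s : m.-tuple T) :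
  gen_seq A B k s -> 0 < m ->
  exists u, m.-1 < k + #|[set w | u \notin B w]|.
Proof.
move=> /andP[Hu /forallP H] m0.
have lt : m.-1 < m by rewrite ltn_predL.
have /exists_inP[u _ Hc] := H (Ordinal lt).
exists u; move: Hc => /=.
set t := take m.-1 s.
have ut : uniq t by exact: take_uniq.
have st : size t = m.-1 by rewrite size_take size_tuple lt.
set p := (fun w => u \in B w).
have Hle : count (predC p) t <= #|[set w | u \notin B w]|.
  rewrite -size_filter cardE; apply: uniq_leq_size; first exact: filter_uniq.
  move=> w; rewrite mem_filter mem_enum => /andP[Hw _]; by rewrite inE.
have := count_predC p t; rewrite st => Hs Hk.
rewrite -Hs; exact: leq_add Hk Hle.
Qed.

Lemma gen_gr_le (T : finType) (A B : T -> {set T}) k X :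
  (forall m (s : m.-tuple T), gen_seq A B k s -> 0 < m -> m <= X) ->
  gen_gr A B k <= X.
Proof.
move=> H; apply/bigmax_leqP => i /existsP[s Hs].
case: (posnP i) => [-> //|]; exact: H Hs.
Qed.

Theorem mainTheorem3 (T : finType) (e : rel T) (delta k : nat) :
  simple_graph e -> is_min_degree e delta -> 0 < k ->
  gamma_gr_tk e k <= #|T| - delta + k /\
  gamma_gr_Zk e k <= gamma_gr_k e k /\
  gamma_gr_k e k <= #|T| - delta + k - 1.
Proof.
move=> [sym irr] [_ Hmin] k0.
have Eo u : [set w | u \notin onbhd e w] = ~: onbhd e u.
  by apply/setP => w; rewrite !inE sym.
have Ec u : [set w | u \notin cnbhd e w] = ~: cnbhd e u.
  by apply/setP => w; rewrite !inE sym eq_sym.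
split; last split.
- apply: gen_gr_le => m s Hs m0.
  have [u] := @gen_seq_bound _ _ _ _ _ _ Hs m0.
  rewrite Eo.
  have := cardsC (onbhd e u); have := Hmin u; rewrite /deg.
  lia.
- apply/bigmax_leqP => i /existsP[s Hs].
  apply: leq_bigmax_cond; apply/existsP; exists s.
  move: Hs => /andP[Hun /forallP H]; rewrite /gen_seq Hun /=; apply/forallP => j.
  have /exists_inP[u Hu Hc] := H j; apply/exists_inP; exists u => //.
  by rewrite /cnbhd inE Hu orbT.
- apply: gen_gr_le => m s Hs m0.
  have [u] := @gen_seq_bound _ _ _ _ _ _ Hs m0.
  rewrite Ec.
  have := cardsC (cnbhd e u); have := Hmin u; rewrite /deg.
  have : #|cnbhd e u| = (deg e u).+1.
    by rewrite /cnbhd cardsU1 /onbhd inE irr.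
  rewrite /deg.
  lia.
Qed.
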